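(* For any positive integer $k$ and integers $n_1,\dots,n_k>1$, \[\mathrm{mur}\Big(\bigcup_{i=1}^k K_{n_i}\Big)=\mathrm{mur}(K_{n_1,\dots,n_k})=k-1,\] where $\bigcup_{i=1}^k K_{n_i}$ is the vertex-disjoint union of complete graphs on $n_1,\dots,n_k$ vertices and $K_{n_1,\dots,n_k}$ is the complete multipartite graph with parts of sizes $n_1,\dots,n_k$.
   Context: For a finite simple undirected graph $G$ on vertices $v_1,\dots,v_n$, let $A_G$ be its $(0,1)$-adjacency matrix, $D_G=\mathrm{diag}(d_1,\dots,d_n)$ with $d_i$ the degree of $v_i$, $I$ the $n\times n$ identity matrix and $J$ the $n\times n$ all-ones matrix. A universal adjacency matrix of $G$ is any matrix $\alpha A_G+\beta I+\gamma J+\delta D_G$ with real scalars $\alpha,\beta,\gamma,\delta$ and $\alpha\neq 0$. The minimum universal rank $\mathrm{mur}(G)$ is the minimum rank over all universal adjacency matrices of $G$. *)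

(* Defs.v *)
From HB Require Import structures.
From mathcomp Require Import all_boot all_order all_algebra.
From mathcomp Require Import reals.
Set Implicit Arguments. Unset Strict Implicit. Unset Printing Implicit Defensive.
Import Order.TTheory GRing.Theory Num.Theory.
Local Open Scope ring_scope.

Definition simple_graph (N : nat) (e : rel 'I_N) : Prop :=
  (forall i j, e i j = e j i) /\ (forall i, e i i = false).

Section UA.
Variable R : realType.

Definition adjmx (N : nat) (e : rel 'I_N) : 'M[R]_N :=
  \matrix_(i, j) (e i j)%:R.

Definition degmx (N : nat) (e : rel 'I_N) : 'M[R]_N :=
  diag_mx (\row_i (#|[set j | e i j]|)%:R).

Definition univ_adjmx (N : nat) (e : rel 'I_N) (a b c d : R) : 'M[R]_N :=
  a *: adjmx e + b%:M + c *: const_mx 1 + d *: degmx e.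

Definition mur_eq (N : nat) (e : rel 'I_N) (r : nat) : Prop :=
  (exists a b c d : R, a != 0 /\ \rank (univ_adjmx e a b c d) = r) /\
  (forall a b c d : R, a != 0 -> (r <= \rank (univ_adjmx e a b c d))%N).
End UA.

Definition union_cliques (N k : nat) (p : 'I_N -> 'I_k) : rel 'I_N :=
  fun u v => (u != v) && (p u == p v).
Definition complete_multipartite (N k : nat) (p : 'I_N -> 'I_k) : rel 'I_N :=
  fun u v => p u != p v.

(* Main.v *)
Require Import Defs.
From HB Require Import structures.
From mathcomp Require Import all_boot all_order all_algebra.
From mathcomp Require Import reals.
From mathcomp Require Import ring zify.
Set Implicit Arguments. Unset Strict Implicit. Unset Printing Implicit Defensive.
Import Order.TTheory GRing.Theory Num.Theory.
Local Open Scope ring_scope.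

Section Aux.
Variable R : realType.

Definition Jm N : 'M[R]_N := const_mx 1.

Lemma rank_addJ N (X : 'M[R]_N) (c : R) :
  (\rank X <= (\rank (X + c *: Jm N)%R).+1)%N.
Proof.
rewrite {1}(_ : X = (X + c *: Jm N) + (- c) *: Jm N); last first.
  by rewrite scaleNr addrK.
set Y := X + _.
have h1 : (\rank (Y + (- c) *: Jm N)%R <= \rank Y + \rank ((- c) *: Jm N))%N.
  have e1 := mxrankS (addmx_sub_adds (submx_refl Y) (submx_refl ((- c) *: Jm N))).
  have e2 := (mxrank_adds_leqif Y ((- c) *: Jm N)).1.
  exact: leq_trans e1 e2.
have h2 : (\rank ((- c) *: Jm N) <= 1)%N.
  have -> : (- c) *: Jm N =
     (const_mx (- c) : 'M[R]_(N,1)) *m (const_mx 1 : 'M[R]_(1,N)).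
    apply/matrixP => u v; rewrite !mxE big_ord1 !mxE; ring.
  apply: leq_trans (mxrankM_maxl _ _) _; exact: rank_leq_col.
rewrite -addn1; exact: leq_trans h1 (leq_add (leqnn _) h2).
Qed.

Lemma rank_lower N k (X : 'M[R]_N) (a : R) (r s : 'I_k -> 'I_N) :
  a != 0 -> (forall i j, X (r i) (s j) = if i == j then a else 0) ->
  (k <= \rank X)%N.
Proof.
move=> a0 hX.
apply: (@mulmx1_min_rank _ _ _ _ _ (rowsub r 1%:M) (colsub s (a^-1)%:M)).
rewrite mulmx_colsub -rowsubE mul_mx_scalar.
apply/matrixP => i j; rewrite !mxE hX.
by case: (i == j) => /=; rewrite ?mulr0 // mulVf.
Qed.

Definition Qm k : 'M[R]_k := \matrix_(i, j) ((i == j)%:R - (k%:R)^-1).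

Lemma rank_Q k : (0 < k)%N -> (\rank (Qm k) <= k.-1)%N.
Proof.
move=> k0.
have hk : (k%:R : R) != 0 by rewrite pnatr_eq0 -lt0n.
have sub : ((const_mx (1%R:R) : 'rV[R]_k) <= kermx (Qm k))%MS.
  apply/sub_kermxP; apply/matrixP => i j; rewrite !mxE.
  rewrite (eq_bigr (fun i0 : 'I_k => (i0 == j)%:R - k%:R^-1)); last first.
    by move=> i0 _; rewrite !mxE mul1r.
  rewrite sumrB sumr_const card_ord (bigD1 j) //= big1 ?addr0; last first.
    by move=> i0 /negbTE ->.
  have -> : (k%:R^-1 : R) *+ k = 1.
    by rewrite -(mulr_natr (k%:R^-1)) mulVf.
  by rewrite eqxx /= subrr.
have := mxrankS sub; rewrite mxrank_ker.
have nz : (0 < \rank (const_mx (1%R:R) : 'rV[R]_k))%N.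
  rewrite lt0n mxrank_eq0; apply/eqP => /matrixP /(_ 0 (Ordinal k0)).
  by rewrite !mxE => /eqP; rewrite oner_eq0.
have := rank_leq_col (Qm k).
move: nz; lia.
Qed.

Lemma univE N (e : rel 'I_N) (a b c d : R) u v :
  univ_adjmx e a b c d u v =
  a * (e u v)%:R + b *+ (u == v) + c + d * ((#|[set j | e u j]|)%:R *+ (u == v)).
Proof. by rewrite /univ_adjmx /adjmx /degmx !mxE mulr1. Qed.

Lemma upper N k (e : rel 'I_N) (p : 'I_N -> 'I_k) (a b c d : R) :
  (0 < k)%N ->
  (forall u v, univ_adjmx e a b c d u v = Qm k (p u) (p v)) ->
  (\rank (univ_adjmx e a b c d) <= k.-1)%N.
Proof.
move=> k0 h.
have -> : univ_adjmx e a b c d = rowsub p 1%:M *m Qm k *m colsub p 1%:M.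
  rewrite mulmx_colsub mulmx1 -rowsubE; apply/matrixP => u v.
  by rewrite h !mxE.
apply: leq_trans (mxrankM_maxl _ _) _.
apply: leq_trans (mxrankM_maxr _ _) _.
exact: rank_Q.
Qed.

Lemma lower N k (e : rel 'I_N) (r s : 'I_k -> 'I_N) (a b c d x t : R) :
  x != 0 -> (0 < k)%N ->
  (forall i j, (univ_adjmx e a b c d + (- t) *: Jm N) (r i) (s j)
               = if i == j then x else 0) ->
  (k.-1 <= \rank (univ_adjmx e a b c d))%N.
Proof.
move=> a0 k0 h.
have h1 := rank_lower a0 h.
have h2 := rank_addJ (univ_adjmx e a b c d + (- t) *: Jm N) t.
have e2 : (univ_adjmx e a b c d + - t *: Jm N) + t *: Jm N = univ_adjmx e a b c d.
  by rewrite scaleNr addrNK.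
rewrite e2 in h2.
have := leq_trans h1 h2. lia.
Qed.

End Aux.

Theorem theorem25 (R : realType) (k : nat) (n : 'I_k -> nat) (N : nat)
  (p : 'I_N -> 'I_k) :
  (0 < k)%N ->
  (forall i, (1 < n i)%N) ->
  (forall i, #|[set v | p v == i]| = n i) ->
  mur_eq R (union_cliques p) k.-1 /\ mur_eq R (complete_multipartite p) k.-1.
Proof.
move=> k0 hn hc.
have H : forall i, exists x : 'I_N * 'I_N,
    [/\ p x.1 = i, p x.2 = i & x.1 != x.2].
  move=> i.
  have := hn i; rewrite -hc => /card_gt1P [x [y [hx hy xy]]].
  by exists (x, y); rewrite !inE in hx hy; split => //; apply/eqP.
have [f hf] := fin_all_exists H.
pose r i := (f i).1; pose s i := (f i).2.
have hrs : forall i j, (r i == s j) = false /\ (p (r i) == p (s j)) = (i == j).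
  move=> i j; have [ri _ rs] := hf i; have [_ sj _] := hf j.
  rewrite /r /s ri sj; split => //.
  case: (eqVneq i j) => [ij|ij].
    by subst j; apply/negbTE.
  by apply/negbTE; apply: contra ij => /eqP/(congr1 p); rewrite ri sj => ->.
have hk : (k%:R : R) != 0 by rewrite pnatr_eq0 -lt0n.
split; split.
- exists 1, 1, (- (k%:R)^-1), 0; split; first exact: oner_neq0.
  apply/eqP; rewrite eqn_leq; apply/andP; split.
    apply: (@upper _ _ _ _ p) => // u v; rewrite univE /union_cliques !mxE.
    case: eqVneq => [->|uv] /=; first by rewrite eqxx /=; ring.
    by case: (p u == p v) => /=; ring.
  apply: (@lower _ _ _ _ r s _ _ _ _ 1 (- k%:R^-1)) => //; first exact: oner_neq0.
  move=> i j; rewrite !mxE /union_cliques.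
  have [-> ->] := hrs i j; case: (i == j) => /=; ring.
- move=> a b c d a0.
  apply: (@lower _ _ _ _ r s _ _ _ _ a c) => //.
  move=> i j; rewrite !mxE /union_cliques.
  have [-> ->] := hrs i j; case: (i == j) => /=; ring.
- exists (-1), 0, (1 - (k%:R)^-1), 0; split.
    by rewrite oppr_eq0 oner_neq0.
  apply/eqP; rewrite eqn_leq; apply/andP; split.
    apply: (@upper _ _ _ _ p) => // u v; rewrite univE /complete_multipartite !mxE.
    by case: (p u == p v) => /=; case: (u == v) => /=; ring.
  apply: (@lower _ _ _ _ r s _ _ _ _ 1 (-1 + (1 - k%:R^-1))) => //; first exact: oner_neq0.
  move=> i j; rewrite !mxE /complete_multipartite.
  have [-> ->] := hrs i j; case: (i == j) => /=; ring.
- move=> a b c d a0.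
  apply: (@lower _ _ _ _ r s _ _ _ _ (- a) (a + c)) => //; first by rewrite oppr_eq0.
  move=> i j; rewrite !mxE /complete_multipartite.
  have [-> ->] := hrs i j; case: (i == j) => /=; ring.
Qed.
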